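(* Let $M\ge 0$, $k\ge 1$, $m\ge 0$ be integers. For $l\ge 0$ let $\mathcal{P}_l(k,m)$ be the set of partitions $(\lambda_1,\dots,\lambda_l)$ into exactly $l$ parts with $\lambda_l\ge k$ and $\lambda_i-\lambda_{i+1}\ge m$ for $1\le i\le l-1$ ($\mathcal{P}_0(k,m)$ contains only the empty partition), and let $\mathcal{P}_{\le M}(k,m)=\bigcup_{l=0}^M\mathcal{P}_l(k,m)$. For a partition $\pi=(\lambda_1,\dots,\lambda_l)$ with $l\ge1$ parts define $\omega_{k,m}(\pi):=(\lambda_l+1-k)\prod_{i=1}^{l-1}(\lambda_i-\lambda_{i+1}+1-m)$, and let $\omega_{k,m}$ of the empty partition be $1$. Then \[\sum_{\pi\in\mathcal{P}_{\le M}(k,m)}\omega_{k,m}(\pi)\,q^{|\pi|}=\sum_{i=0}^{M}\frac{q^{m\binom{i}{2}+ki}}{(q;q)_i^2}.\]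
   Context: A partition is a finite weakly decreasing sequence of positive integers; $|\pi|$ is the sum of its parts. $(a;q)_L=\prod_{n=0}^{L-1}(1-aq^n)$. *)

(* Defs.v *)
From mathcomp Require Import all_boot all_order all_algebra.
Set Implicit Arguments. Unset Strict Implicit. Unset Printing Implicit Defensive.
Import Order.TTheory GRing.Theory Num.Theory.
Local Open Scope ring_scope.

Definition is_partition (s : seq nat) : bool :=
  sorted (fun a b => (b <= a)%N) s && all (fun x => (0 < x)%N) s.

Definition psize (s : seq nat) : nat := sumn s.

Definition in_P (k m : nat) (s : seq nat) : bool :=
  [&& is_partition s,
      sorted (fun a b => (b + m <= a)%N) s &
      match s with [::] => true | x :: t => (k <= last x t)%N end].

Definition omega (k m : nat) (s : seq nat) : nat :=
  match s with
  | [::] => 1%N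
  | x :: t => ((last x t + 1 - k) *
               \prod_(d <- pairmap (fun a b => a - b + 1 - m) x t) d)%N
  end.

(* Every partition of n with l <= M parts has all parts in [0,n], so it is
   enumerated exactly once as an l-tuple of elements of 'I_(n+1). *)
Definition lhs_coef (M k m n : nat) : nat :=
  \sum_(l < M.+1) \sum_(t : l.-tuple 'I_n.+1)
     (if in_P k m (map val t) && (psize (map val t) == n)
      then omega k m (map val t) else 0)%N.

Definition fps := nat -> rat.

Definition fps_of_poly (p : {poly rat}) : fps := fun n => p`_n.

Definition fps_mul (f g : fps) : fps :=
  fun n => \sum_(j < n.+1) f j * g (n - j)%N.

(* Multiplicative inverse of a power series with invertible constant term,
   by the standard recursion g_0 = f_0^{-1},
   g_N = - f_0^{-1} * sum_{j=1}^{N} f_j g_{N-j}.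
   inv_list f N = [:: g_0; ...; g_N]. *)
Fixpoint inv_list (f : fps) (N : nat) : seq rat :=
  match N with
  | 0%N => [:: (f 0%N)^-1]
  | N'.+1 => let s := inv_list f N' in
             rcons s (- (f 0%N)^-1 *
                      \sum_(j < N) f j.+1 * nth 0 s (N' - j)%N)
  end.

Definition fps_inv (f : fps) : fps := fun n => nth 0 (inv_list f n) n.

Definition qpoch (i : nat) : {poly rat} := \prod_(j < i) (1 - 'X^(j.+1)).

Definition rhs_coef (M k m n : nat) : rat :=
  \sum_(i < M.+1)
    fps_mul (fps_of_poly 'X^(m * 'C(i, 2) + k * i))
            (fps_mul (fps_inv (fps_of_poly (qpoch i)))
                     (fps_inv (fps_of_poly (qpoch i)))) n.

(* Main.v *)
Require Import Defs.
From mathcomp Require Import all_boot all_order all_algebra.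
From mathcomp Require Import ring lra zify.
Set Implicit Arguments. Unset Strict Implicit. Unset Printing Implicit Defensive.
Import Order.TTheory GRing.Theory Num.Theory.

Fixpoint SL (B l : nat) (F : seq nat -> nat) : nat :=
  match l with
  | 0 => F [::]
  | l'.+1 => \sum_(x < B) SL B l' (fun s => F (nat_of_ord x :: s))
  end.

Lemma eq_SL B l F G : (forall s, F s = G s) -> SL B l F = SL B l G.
Proof.
elim: l F G => [|l IH] F G H /=; first exact: H.
apply: eq_bigr => x _; apply: IH => s; exact: H.
Qed.

Lemma SL_tuple B l F :
  \sum_(t : l.-tuple 'I_B) F (map val t) = SL B l F.
Proof.
elim: l F => [|l IH] F /=.
  rewrite (eq_bigr (fun _ => F [::])); last by move=> t _; rewrite tuple0.
  by rewrite sum_nat_const card_tuple expn0 mul1n.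
pose h (p : 'I_B * l.-tuple 'I_B) : l.+1.-tuple 'I_B := [tuple of p.1 :: p.2].
pose hi (t : l.+1.-tuple 'I_B) : 'I_B * l.-tuple 'I_B := (thead t, [tuple of behead t]).
have hK : cancel hi h.
  move=> t; apply: val_inj => /=; by case: t => [[|a s] //].
have hK' : cancel h hi.
  by move=> [a t]; congr pair; apply: val_inj.
rewrite (reindex h); last by exists hi => p _; [exact: hK' | exact: hK].
rewrite -(pair_bigA _ (fun a (t : l.-tuple 'I_B) => F (map val (h (a, t))))).
apply: eq_bigr => a _ /=.
rewrite -(IH (fun s => F (nat_of_ord a :: s))).
by [].
Qed.

Lemma SL_rcons B l F :
  SL B l.+1 F = \sum_(x < B) SL B l (fun s => F (rcons s x)).
Proof.
elim: l F => [|l IH] F; first by [].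
change (SL B l.+2 F) with (\sum_(y < B) SL B l.+1 (fun s => F (nat_of_ord y :: s))).
transitivity (\sum_(y < B) \sum_(x < B) SL B l (fun s => F (nat_of_ord y :: rcons s x))).
  by apply: eq_bigr => y _; rewrite (IH (fun s => F (nat_of_ord y :: s))).
rewrite exchange_big /=; apply: eq_bigr => x _; apply: eq_bigr => y _.
by [].
Qed.

Lemma SL_if B l (b : bool) F : SL B l (fun s => if b then F s else 0) = if b then SL B l F else 0.
Proof.
case: b; first by [].
elim: l F => [|l IH] F //=; rewrite big1 // => x _; exact: (IH (fun s => F (nat_of_ord x :: s))).
Qed.

Lemma SL_scale B l c F : SL B l (fun s => c * F s) = c * SL B l F.
Proof.
elim: l F => [|l IH] F //=; rewrite big_distrr /=; apply: eq_bigr => x _.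
exact: (IH (fun s => F (nat_of_ord x :: s))).
Qed.

Lemma pairmap_rcons (T U : Type) (f : T -> T -> U) x s y :
  pairmap f x (rcons s y) = rcons (pairmap f x s) (f (last x s) y).
Proof. by elim: s x => [|a s IH] x //=; rewrite IH. Qed.

Lemma in_P_rcons k m s x : (1 <= k)%N ->
  in_P k m (rcons s x) = (k <= x)%N && in_P (x + m) m s.
Proof.
move=> k1; case: s => [|y t].
  rewrite /in_P /is_partition /=.
  rewrite !andbT; case: (leqP k x) => H; rewrite ?andbF //= andbT (leq_trans k1 H) //.
rewrite /in_P /is_partition /= !rcons_path last_rcons all_rcons.
set L := last y t.
set P1 := path _ y t. set P2 := path _ y t. set A := all _ t.
clearbody L P1 P2 A.
case: (leqP k x) => H1.
2:{ by rewrite !andbF. }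
have -> : (1 <= x)%N by lia.
case: (leqP (x+m) L) => H2; last by rewrite !andbF.
have -> : (x <= L)%N by lia.
by case: P1; case: P2; case: A; case: (0 < y)%N.
Qed.

Lemma omega_rcons k m s x : in_P (x + m) m s ->
  omega k m (rcons s x) = ((x + 1 - k) * omega (x + m) m s)%N.
Proof.
case: s => [|y t] /=.
  by move=> _; rewrite big_nil.
rewrite /in_P => /and3P [_ _ H].
rewrite last_rcons pairmap_rcons big_rcons /=.
have -> : (last y t - x + 1 - m = last y t + 1 - (x + m))%N.
  by move: H; move: (last y t) => L; lia.
by rewrite [(_ * (last y t + 1 - (x + m)))%N]mulnC.
Qed.

Lemma psize_rcons s x : psize (rcons s x) = (psize s + x)%N.
Proof. by rewrite /psize -cats1 sumn_cat /= addn0. Qed.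
Local Open Scope ring_scope.

Definition eqm (B : nat) (p q : {poly rat}) := forall j, (j < B)%N -> p`_j = q`_j.

Lemma eqm_refl B p : eqm B p p. Proof. by []. Qed.
Lemma eqm_sym B p q : eqm B p q -> eqm B q p. Proof. by move=> H j /H. Qed.
Lemma eqm_trans B p q r : eqm B p q -> eqm B q r -> eqm B p r.
Proof. by move=> H1 H2 j hj; rewrite H1 // H2. Qed.
Lemma eqm_mul B p p' r r' : eqm B p p' -> eqm B r r' -> eqm B (p * r) (p' * r').
Proof.
move=> H1 H2 j hj; rewrite !coefM; apply: eq_bigr => i _.
have hi := ltn_ord i.
rewrite H1; last by lia.
rewrite H2 //; lia.
Qed.
Lemma eqm_add B p p' r r' : eqm B p p' -> eqm B r r' -> eqm B (p + r) (p' + r').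
Proof. by move=> H1 H2 j hj; rewrite !coefD H1 // H2. Qed.
Lemma eqm_sum B (I : Type) (r : seq I) (F G : I -> {poly rat}) :
  (forall i, eqm B (F i) (G i)) -> eqm B (\sum_(i <- r) F i) (\sum_(i <- r) G i).
Proof. by move=> H j hj; rewrite !coef_sum; apply: eq_bigr => i _; rewrite H. Qed.
Lemma eqm_Xn0 B a p : (B <= a)%N -> eqm B ('X^a * p) 0.
Proof. move=> H j hj; rewrite coefXnM coef0; case: ifP => //; lia. Qed.

Lemma geom2 (R : comNzRingType) (Y : R) D :
  (1 - Y) ^+ 2 * \sum_(0 <= d < D) Y ^+ d *+ d.+1 =
  1 - Y ^+ D * (D.+1%:R - D%:R * Y).
Proof.
elim: D => [|D IH]; first by rewrite big_geq // mulr0 expr0 mul1r mul0r subr0 subrr.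
rewrite big_nat_recr //= mulrDr IH -[Y ^+ D *+ _]mulr_natr.
have e1 : D.+1%:R = D%:R + 1 :> R by rewrite -natr1.
have e2 : D.+2%:R = D%:R + 1 + 1 :> R by rewrite -!natr1.
rewrite e2 e1 [Y ^+ D.+1]exprSr; move: (Y ^+ D) (D%:R : R) => Z d.
ring.
Qed.
Definition Fc (m k j : nat) (s : seq nat) : nat :=
  (if in_P k m s && (psize s == j) then omega k m s else 0)%N.
Definition G B m l k j := SL B l (Fc m k j).

Lemma Fc_rcons m k j s x : (1 <= k)%N -> Fc m k j (rcons s x) =
  (if (k <= x) && (x <= j) then (x + 1 - k) * Fc m (x + m) (j - x) s else 0)%N.
Proof.
move=> k1; rewrite /Fc in_P_rcons // psize_rcons.
case: (leqP k x) => H1 //=.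
case: (leqP x j) => H2 /=; last first.
  have -> : (psize s + x == j)%N = false by apply/negbTE; lia.
  by rewrite andbF.
have -> : (psize s + x == j)%N = (psize s == j - x)%N.
  by apply/eqP/eqP; lia.
case E: (in_P (x + m)%N m s) => /=; last by rewrite muln0.
case: (psize s == j - x)%N; last by rewrite muln0.
exact: omega_rcons.
Qed.

Lemma G_succ B m l k j : (1 <= k)%N -> G B m l.+1 k j =
  (\sum_(x < B) (if (k <= x) && (x <= j) then (x + 1 - k) * G B m l (x + m) (j - x) else 0))%N.
Proof.
move=> k1; rewrite /G SL_rcons; apply: eq_bigr => x _.
rewrite (eq_SL _ _ (fun s => Fc_rcons m j s x k1)) SL_if.
by case: ifP => _ //; rewrite SL_scale.
Qed.

Definition gp B m l k : {poly rat} := \poly_(j < B) (G B m l k j)%:R.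

Lemma sum_shift B k (f : nat -> {poly rat}) : (forall x, (x < k)%N -> f x = 0) ->
  \sum_(x < B) f x = \sum_(0 <= d < B - k) f (d + k)%N.
Proof.
move=> f0; rewrite -(big_mkord xpredT).
case: (leqP k B) => H.
  rewrite (@big_cat_nat _ _ _ k 0 B) //= big_nat big1 ?add0r; last first.
    by move=> x /andP [_ hx]; apply: f0.
  by rewrite -{1}[k]add0n big_addn.
rewrite big_nat big1; last by move=> x /andP [_ hx]; apply: f0; lia.
rewrite (_ : B - k = 0)%N; [by rewrite big_geq | lia].
Qed.

Lemma eqm_muln B p q c : eqm B p q -> eqm B (p *+ c) (q *+ c).
Proof. by move=> H j hj; rewrite !coefMn H. Qed.

Lemma gp_succ B m l k : (1 <= k)%N ->
  eqm B (gp B m l.+1 k)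
    (\sum_(x < B) ('X^x * gp B m l (x + m)) *+ (if (k <= x)%N then x + 1 - k else 0)%N).
Proof.
move=> k1 j hj; rewrite coef_poly hj G_succ // natr_sum coef_sum.
apply: eq_bigr => x _.
rewrite coefMn coefXnM coef_poly.
case: (leqP k x) => H1 /=; last by rewrite mulr0n.
case: (leqP x j) => H2 /=.
  idtac.
  have -> : (j - x < B)%N by lia.
  by rewrite natrM mulr_natl.
by rewrite mul0rn.
Qed.

Lemma qpochS l : qpoch l.+1 = qpoch l * (1 - 'X^(l.+1)).
Proof. by rewrite /qpoch big_ord_recr. Qed.

Lemma gp_main B m l k : (1 <= k)%N ->
  eqm B (qpoch l ^+ 2 * gp B m l k) 'X^(m * 'C(l, 2) + k * l).
Proof.
elim: l k => [|l IH] k k1.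
  rewrite /qpoch big_ord0 expr1n mul1r muln0 addn0 /= muln0.
  move=> j hj; rewrite coef_poly hj coefXn /G /= /Fc /=.
  by case: j {hj}.
refine (eqm_trans (eqm_mul (@eqm_refl _ _) (@gp_succ B m l k k1)) _).
rewrite mulr_sumr.
pose c (x : nat) := (if (k <= x)%N then (x + 1 - k) else 0)%N.
pose Y : {poly rat} := 'X^(l.+1).
have E1 : forall x : 'I_B, qpoch l.+1 ^+ 2 * ('X^x * gp B m l (x + m) *+ c x) =
   (qpoch l ^+ 2 * gp B m l (x + m)) * ((1 - Y) ^+ 2 * 'X^x) *+ c x.
  move=> x; rewrite mulrnAr qpochS; congr (_ *+ _); rewrite exprMn /Y.
  move: ('X^(l.+1) : {poly rat}) ('X^x : {poly rat}) (qpoch l) (gp B m l (x + m)) => a b q g; ring.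
rewrite (eq_bigr _ (fun x _ => E1 x)).
rewrite (@sum_shift B k (fun x : nat => (qpoch l ^+ 2 * gp B m l (x + m)) * ((1 - Y) ^+ 2 * 'X^x) *+ c x)); last first.
  by move=> x hx; rewrite /c leqNgt hx mulr0n.
refine (eqm_trans (eqm_sum _ (fun d => eqm_muln _ (eqm_mul (IH (d + k + m)%N _) (@eqm_refl _ _)))) _).
  lia.
set E := (m * 'C(l.+1, 2) + k * l.+1)%N.
rewrite (_ : \sum_(0 <= i < B - k) _ =
   'X^E * ((1 - Y) ^+ 2 * \sum_(0 <= d < B - k) Y ^+ d *+ d.+1)); last first.
  rewrite !mulr_sumr; apply: eq_bigr => d _.
  have -> : c (d + k)%N = d.+1 by rewrite /c leq_addl; lia.
  rewrite !mulrnAr; congr (_ *+ _).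
  rewrite /Y -exprM mulrCA [RHS]mulrCA -!exprD; congr (_ * 'X^_).
  rewrite /E binS bin1; ring.
rewrite geom2 mulrBr mulr1 mulrA /Y -exprM -exprD.
move=> j hj; rewrite coefB (eqm_Xn0 _ _ hj) ?coef0 ?subr0 //.
have : (k * l.+1 <= E)%N by rewrite /E leq_addl.
move: E => E' HE; clear -HE; nia.
Qed.

Lemma size_inv_list f N : size (inv_list f N) = N.+1.
Proof. by elim: N => [|N IH] //=; rewrite size_rcons IH. Qed.

Lemma inv_list_nth f N j : (j <= N)%N -> nth 0 (inv_list f N) j = fps_inv f j.
Proof.
elim: N => [|N IH] hj; first by case: j hj.
case: (leqP j N) => H.
  by rewrite /= nth_rcons size_inv_list ltnS H IH.
by have -> : j = N.+1 by lia.
Qed.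

Lemma fps_inv_S f N : fps_inv f N.+1 =
  - (f 0%N)^-1 * \sum_(j < N.+1) f j.+1 * fps_inv f (N - j)%N.
Proof.
rewrite {1}/fps_inv /= nth_rcons size_inv_list ltnn eqxx.
congr (_ * _); apply: eq_bigr => j _; rewrite inv_list_nth //; lia.
Qed.

Lemma Ip_inv B (p : {poly rat}) : p`_0 = 1 ->
  eqm B (p * \poly_(j < B) fps_inv (fps_of_poly p) j) 1.
Proof.
move=> p0 j hj; rewrite coefM coef1.
case: j hj => [|N] hj.
  rewrite big_ord_recl big_ord0 addr0 coef_poly hj p0 mul1r /fps_inv /= /fps_of_poly p0.
  by rewrite invr1.
rewrite big_ord_recl /= subn0 coef_poly hj p0 mul1r fps_inv_S /fps_of_poly p0 invr1 mulN1r.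
rewrite [X in _ + X](eq_bigr (fun i : 'I_N.+1 => p`_i.+1 * fps_inv (fun n => p`_n) (N - i)%N)).
  by rewrite addNr.
move=> i _; rewrite /bump /= coef_poly subSS.
have -> : (N - i < B)%N by lia.
by [].
Qed.

Lemma fps_mul_poly f g (p q : {poly rat}) n :
  (forall i, (i <= n)%N -> f i = p`_i) -> (forall i, (i <= n)%N -> g i = q`_i) ->
  fps_mul f g n = (p * q)`_n.
Proof.
move=> Hf Hg; rewrite /fps_mul coefM; apply: eq_bigr => i _.
have hi := ltn_ord i.
rewrite Hf ?Hg //; lia.
Qed.

Lemma qpoch0 i : (qpoch i)`_0 = 1.
Proof.
rewrite -horner_coef0 /qpoch horner_prod big1 // => j _.
by rewrite !hornerE expr0n /= subr0.
Qed.

Theorem corollary6 (M k m : nat) : (1 <= k)%N ->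
  forall n : nat, (lhs_coef M k m n)%:R = rhs_coef M k m n :> rat.
Proof.
move=> k1 n; rewrite /lhs_coef /rhs_coef natr_sum; apply: eq_bigr => i _.
transitivity ((G n.+1 m i k n)%:R : rat).
  by congr (_%:R); exact: (SL_tuple n.+1 i (Fc m k n)).
have -> : ((G n.+1 m i k n)%:R : rat) = (gp n.+1 m i k)`_n by rewrite coef_poly ltnSn.
set Ip := \poly_(j < n.+1) fps_inv (fps_of_poly (qpoch i)) j.
have HI := @Ip_inv n.+1 _ (qpoch0 i).
have key : eqm n.+1 (gp n.+1 m i k) ('X^(m * 'C(i, 2) + k * i) * (Ip * Ip)).
  have e1 : gp n.+1 m i k = (1 * 1) * gp n.+1 m i k by rewrite mul1r mul1r.
  rewrite e1.
  refine (eqm_trans (eqm_mul (eqm_mul (eqm_sym HI) (eqm_sym HI)) (@eqm_refl _ _)) _).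
  have e2 : (qpoch i * Ip) * (qpoch i * Ip) * gp n.+1 m i k =
            (Ip * Ip) * (qpoch i ^+ 2 * gp n.+1 m i k).
    by rewrite /Ip; move: (qpoch i) (\poly_(j < n.+1) _) (gp _ _ _ _) => a b c; ring.
  rewrite e2 [X in eqm _ _ X]mulrC.
  exact: (eqm_mul (@eqm_refl _ _) (@gp_main n.+1 m i k k1)).
rewrite (key n (ltnSn n)).
symmetry; apply: fps_mul_poly => // j hj.
apply: fps_mul_poly => t ht; rewrite /Ip coef_poly; (have -> : (t < n.+1)%N by lia); by [].
Qed.
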